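(* Let $x>0$ and let $s\in\mathbb{Z}_+$ be a nonnegative integer. Then the Bessel function of the first kind $J_s$ satisfies $$ |J_s(x)|\le 2\sqrt{\frac{2}{\pi x}}\left(1+\frac{s}{x}\right)^{s}. $$ *)

(* Defs.v *)
From Stdlib Require Import Reals Arith Factorial.
From Coquelicot Require Import Coquelicot.
Open Scope R_scope.

Definition bessel_J (s : nat) (x : R) : R :=
  Series (fun m : nat =>
    (-1) ^ m / (INR (fact m) * INR (fact (m + s))) * (x / 2) ^ (2 * m + s)).

(* Main.v *)
Require Import Defs.
From Stdlib Require Import Reals Lra Lia Arith Factorial.
From Coquelicot Require Import Coquelicot.
Open Scope R_scope.

Definition cc (n m : nat) : R := (-1) ^ m / (INR (fact m) * INR (fact (m + n))).

Lemma fact_pos' k : 0 < INR (fact k).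
Proof. apply lt_0_INR, lt_O_fact. Qed.

Lemma cc_neq0 n m : cc n m <> 0.
Proof.
  unfold cc. apply Rmult_integral_contrapositive; split.
  apply pow_nonzero; lra.
  apply Rinv_neq_0_compat. pose proof (fact_pos' m); pose proof (fact_pos' (m+n)); nra.
Qed.

Lemma cc_ratio n m : Rabs (cc n (S m) / cc n m) = / (INR (S m) * INR (S (m + n))).
Proof.
  unfold cc. simpl (S m + n)%nat. change (fact (S m)) with (S m * fact m)%nat.
  change (fact (S (m + n))) with (S (m+n) * fact (m + n))%nat.
  rewrite !mult_INR. simpl pow.
  pose proof (fact_pos' m); pose proof (fact_pos' (m+n)).
  assert (0 < INR (S m)) by (apply lt_0_INR; lia).
  assert (0 < INR (S (m+n))) by (apply lt_0_INR; lia).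
  assert ((-1)^m <> 0) by (apply pow_nonzero; lra).
  replace (-1 * (-1) ^ m / (INR (S m) * INR (fact m) * (INR (S (m + n)) * INR (fact (m + n)))) /
   ((-1) ^ m / (INR (fact m) * INR (fact (m + n))))) with (- / (INR (S m) * INR (S (m + n)))) by (field; lra).
  rewrite Rabs_Ropp, Rabs_pos_eq; [reflexivity|].
  left; apply Rinv_0_lt_compat; nra.
Qed.

Lemma cc_radius n : CV_radius (cc n) = p_infty.
Proof.
  apply CV_radius_infinite_DAlembert. apply cc_neq0.
  apply is_lim_seq_ext with (fun m => / (INR (S m) * INR (S (m + n)))).
  { intros m; rewrite cc_ratio; reflexivity. }
  apply is_lim_seq_le_le with (fun _ => 0) (fun m => / INR (S m)).
  - intros m. pose proof (lt_0_INR (S m) ltac:(lia)). pose proof (lt_0_INR (S (m+n)) ltac:(lia)).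
    assert (1 <= INR (S (m+n))) by (apply (le_INR 1); lia).
    split. left; apply Rinv_0_lt_compat; nra.
    apply Rinv_le_contravar; nra.
  - apply is_lim_seq_const.
  - apply (is_lim_seq_incr_1 (fun m => / INR m)).
    replace (Finite 0) with (Rbar_inv p_infty) by reflexivity.
    apply is_lim_seq_inv. apply is_lim_seq_INR. discriminate.
Qed.

Lemma cc_in n y : Rbar_lt (Rabs y) (CV_radius (cc n)).
Proof. rewrite cc_radius; exact I. Qed.

Definition H (n : nat) (y : R) : R := PSeries (cc n) y.

Lemma J_H n x : bessel_J n x = (x/2)^n * H n ((x/2)^2).
Proof.
  unfold bessel_J, H, PSeries. rewrite <- Series_scal_l. apply Series_ext. intros m.
  unfold cc. rewrite pow_add, <- pow_mult. field.
  pose proof (fact_pos' m); pose proof (fact_pos' (m+n)). nra.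
Qed.
Lemma cc_rec n m : PS_plus (cc n) (PS_incr_1 (cc (n+2))) m = INR (n+1) * cc (n+1) m.
Proof.
  unfold PS_plus, PS_incr_1, plus; simpl. destruct m as [|k].
  - unfold cc. rewrite Nat.add_1_r. rewrite !Nat.add_0_l. change (fact (S n)) with (S n * fact n)%nat.
    rewrite mult_INR, S_INR. change zero with 0. cbn [pow fact INR].
    pose proof (fact_pos' n). field. pose proof (pos_INR n). lra.
  - unfold cc. replace (S k + n)%nat with (S (k+n)) by lia.
    replace (k + (n+2))%nat with (S (S (k+n))) by lia.
    replace (S k + (n+1))%nat with (S (S (k+n))) by lia.
    change (fact (S k)) with (S k * fact k)%nat.
    change (fact (S (S (k+n)))) with (S (S (k+n)) * fact (S (k+n)))%nat.
    change (fact (S (k+n))) with (S (k+n) * fact (k+n))%nat.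
    rewrite !mult_INR. simpl pow. rewrite ?S_INR, ?plus_INR.
    pose proof (fact_pos' k). pose proof (fact_pos' (k+n)).
    pose proof (pos_INR k). pose proof (pos_INR n). simpl. field. repeat split; lra.
Qed.

Lemma H_rec n y : H n y + y * H (n+2) y = INR (n+1) * H (n+1) y.
Proof.
  unfold H. rewrite <- PSeries_incr_1, <- PSeries_plus.
  rewrite <- PSeries_scal. apply PSeries_ext. intros m. rewrite cc_rec. reflexivity.
  apply CV_radius_inside, cc_in.
  apply ex_pseries_incr_1, CV_radius_inside, cc_in.
Qed.

Lemma J_rec n x : 0 < x ->
  bessel_J (n+2) x = 2 * INR (n+1) / x * bessel_J (n+1) x - bessel_J n x.
Proof.
  intros hx. rewrite !J_H.
  pose proof (H_rec n ((x/2)^2)).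
  replace ((x/2)^(n+2)) with ((x/2)^n * (x/2)^2) by (rewrite pow_add; reflexivity).
  replace ((x/2)^(n+1)) with ((x/2)^n * (x/2)) by (rewrite pow_add; simpl; ring).
  replace ((x / 2) ^ n * (x / 2) ^ 2 * H (n + 2) ((x / 2) ^ 2)) with
    ((x/2)^n * ((x / 2) ^ 2 * H (n + 2) ((x / 2) ^ 2))) by ring.
  replace ((x / 2) ^ 2 * H (n + 2) ((x / 2) ^ 2)) with
    (INR (n + 1) * H (n + 1) ((x / 2) ^ 2) - H n ((x/2)^2)) by lra.
  field. lra.
Qed.
Lemma der0 m : PS_derive (cc 0) m = - cc 1 m.
Proof.
  unfold PS_derive, cc. rewrite !Nat.add_0_r. replace (m+1)%nat with (S m) by lia.
  change (fact (S m)) with (S m * fact m)%nat. rewrite mult_INR. simpl pow.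
  pose proof (fact_pos' m). pose proof (lt_0_INR (S m) ltac:(lia)). field. lra.
Qed.

Lemma der1 m : @eq R (PS_incr_1 (PS_derive (cc 1)) m) (cc 0 m - cc 1 m).
Proof.
  destruct m as [|k].
  - unfold PS_incr_1. change zero with 0. unfold cc. simpl. field.
  - unfold PS_incr_1, PS_derive, cc. rewrite !Nat.add_0_r.
    replace (S k+1)%nat with (S (S k)) by lia. replace (k+1)%nat with (S k) by lia.
    change (fact (S (S k))) with (S (S k) * fact (S k))%nat.
    change (fact (S k)) with (S k * fact k)%nat. rewrite !mult_INR. simpl pow.
    pose proof (fact_pos' k). pose proof (lt_0_INR (S k) ltac:(lia)).
    pose proof (lt_0_INR (S (S k)) ltac:(lia)). rewrite (S_INR (S k)). field. lra.
Qed.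

Lemma H0_deriv y : is_derive (H 0) y (- H 1 y).
Proof.
  unfold H. eapply is_derive_ext; [intros t; reflexivity|].
  replace (- PSeries (cc 1) y) with (PSeries (PS_derive (cc 0)) y).
  apply is_derive_PSeries, cc_in.
  rewrite (PSeries_ext _ (PS_scal (-1) (cc 1))). rewrite PSeries_scal. ring.
  intros m. rewrite der0. unfold PS_scal, scal; simpl. unfold mult; simpl. ring.
Qed.

Lemma H1_deriv y : is_derive (H 1) y (PSeries (PS_derive (cc 1)) y).
Proof. apply is_derive_PSeries, cc_in. Qed.

Lemma H1_der_eq y : y * PSeries (PS_derive (cc 1)) y = H 0 y - H 1 y.
Proof.
  rewrite <- PSeries_incr_1. unfold H. rewrite <- PSeries_minus.
  apply PSeries_ext. intros m. rewrite der1. reflexivity.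
  apply CV_radius_inside, cc_in. apply CV_radius_inside, cc_in.
Qed.

Definition J0 x := bessel_J 0 x.
Definition J1 x := bessel_J 1 x.

Lemma J0_eq x : J0 x = H 0 ((x/2)^2).
Proof. unfold J0. rewrite J_H. simpl. ring. Qed.
Lemma J1_eq x : J1 x = (x/2) * H 1 ((x/2)^2).
Proof. unfold J1. rewrite J_H. simpl. ring. Qed.

Lemma sq_deriv x : is_derive (fun t => (t/2)^2) x (x/2).
Proof. auto_derive; [exact I|]. field. Qed.

Lemma J0_deriv x : is_derive J0 x (- J1 x).
Proof.
  eapply is_derive_ext. intros t; symmetry; apply J0_eq.
  rewrite J1_eq.
  replace (- (x / 2 * H 1 ((x / 2) ^ 2))) with (scal (x/2) (- H 1 ((x/2)^2))).
  apply (is_derive_comp (H 0) (fun t => (t/2)^2)). apply H0_deriv. apply sq_deriv.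
  unfold scal; simpl; unfold mult; simpl. ring.
Qed.

Lemma J1_deriv x : x <> 0 -> is_derive J1 x (J0 x - J1 x / x).
Proof.
  intros hx.
  eapply is_derive_ext. intros t; symmetry; apply J1_eq.
  rewrite J0_eq, J1_eq.
  pose proof (H1_der_eq ((x/2)^2)) as E.
  apply is_derive_ext with (fun t => (t/2) * (fun u => H 1 ((u/2)^2)) t). reflexivity.
  replace (H 0 ((x / 2) ^ 2) - x / 2 * H 1 ((x / 2) ^ 2) / x) with
    (1/2 * H 1 ((x/2)^2) + x/2 * scal (x/2) (PSeries (PS_derive (cc 1)) ((x/2)^2))).
  apply (is_derive_mult (fun t => t/2) (fun u => H 1 ((u/2)^2))).
  auto_derive; [exact I| field].
  apply (is_derive_comp (H 1) (fun t => (t/2)^2)). apply H1_deriv. apply sq_deriv.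
  intros; apply Rmult_comm.
  set (y := (x/2)^2) in *. unfold scal; simpl; unfold mult; simpl.
  replace (x / 2 * (x / 2 * PSeries (PS_derive (cc 1)) y)) with
    (y * PSeries (PS_derive (cc 1)) y) by (unfold y; ring).
  rewrite E. field. exact hx.
Qed.
Definition En x := x*(J0 x^2 + J1 x^2) - J0 x * J1 x + J0 x^2/(2*x).

Lemma En_deriv x : 0 < x -> is_derive En x (- J0 x ^2 / (2 * x^2)).
Proof.
  intros hx. unfold En.
  pose proof (J0_deriv x) as D0. pose proof (J1_deriv x ltac:(lra)) as D1.
  auto_derive.
  - repeat split; try (eexists; eassumption); lra.
  - change (fun x0 : R => J0 x0) with J0. change (fun x0 : R => J1 x0) with J1.
    rewrite (is_derive_unique _ _ _ D0), (is_derive_unique _ _ _ D1). field. lra.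
Qed.

Lemma En_decr x : 1 <= x -> En x <= En 1.
Proof.
  intros hx. destruct (Req_dec x 1) as [->|hne]; [lra|].
  destruct (MVT_gen En 1 x (fun t => - J0 t ^2 / (2 * t^2))) as [c [hc e]].
  - intros t ht. apply En_deriv. rewrite Rmin_left in ht; lra.
  - intros t ht. rewrite Rmin_left in ht by lra. apply continuity_pt_filterlim.
    apply (@ex_derive_continuous R_AbsRing R_NormedModule). eexists; apply En_deriv; lra.
  - rewrite Rmin_left, Rmax_right in hc by lra.
    assert (0 <= J0 c ^ 2 / (2 * c ^ 2)).
    { apply Rmult_le_pos; [apply pow2_ge_0 | left; apply Rinv_0_lt_compat; nra]. }
    assert (- J0 c ^ 2 / (2 * c ^ 2) * (x - 1) <= 0).
    { unfold Rdiv in *. rewrite <- Ropp_mult_distr_l. nra. }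
    lra.
Qed.
Lemma cc_abs n m : Rabs (cc n m) <= 1.
Proof.
  unfold cc. unfold Rdiv. rewrite Rabs_mult, <- RPow_abs. replace (Rabs (-1)) with 1 by (rewrite Rabs_left; lra). rewrite pow1.
  assert (1 <= INR (fact m)) by (apply (le_INR 1), lt_O_fact).
  assert (1 <= INR (fact (m+n))) by (apply (le_INR 1), lt_O_fact).
  rewrite Rabs_inv, Rabs_pos_eq by nra. rewrite Rmult_1_l.
  rewrite <- Rinv_1. apply Rinv_le_contravar; nra.
Qed.

Lemma tail_bound n y N : 0 <= y < 1 ->
  Rabs (Series (fun k => cc n (N+k) * y^(N+k))) <= y^N/(1-y).
Proof.
  intros hy.
  assert (G : is_series (fun k => y^N * y^k) (y^N * / (1 - y))).
  { apply (is_series_scal_l (y^N) (fun k => y^k)). apply is_series_geom. rewrite Rabs_pos_eq; lra. }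
  assert (B : forall k, 0 <= Rabs (cc n (N+k) * y^(N+k)) <= y^N * y^k).
  { intros k. split. apply Rabs_pos. rewrite Rabs_mult, <- pow_add, (Rabs_pos_eq (y^(N+k))).
    pose proof (cc_abs n (N+k)). pose proof (pow_le y (N+k) ltac:(lra)). nra.
    apply pow_le; lra. }
  eapply Rle_trans. apply Series_Rabs.
  apply (@ex_series_le R_AbsRing R_CompleteNormedModule _ (fun k => y^N*y^k)). intros k. unfold norm; simpl. unfold abs; simpl.
  rewrite Rabs_Rabsolu. apply B. eexists; exact G.
  eapply Rle_trans. apply (Series_le _ (fun k => y^N*y^k)). exact B. eexists; exact G.
  rewrite (is_series_unique _ _ G). unfold Rdiv. lra.
Qed.
Lemma H_ex n y : ex_series (fun k => cc n k * y^k).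
Proof.
  generalize (CV_radius_inside _ _ (cc_in n y)). unfold ex_pseries. apply ex_series_ext.
  intros k. rewrite pow_n_pow. unfold scal; simpl; unfold mult; simpl. ring.
Qed.

Lemma H_split n y : H n y = sum_f_R0 (fun k => cc n k * y^k) 5 + Series (fun k => cc n (6+k) * y^(6+k)).
Proof. unfold H, PSeries. rewrite (Series_incr_n _ 6); [reflexivity|lia|apply H_ex]. Qed.

Lemma H_bound n y : 0 <= y < 1 ->
  Rabs (H n y - sum_f_R0 (fun k => cc n k * y^k) 5) <= y^6/(1-y).
Proof.
  intros hy. rewrite H_split. replace (sum_f_R0 (fun k : nat => cc n k * y ^ k) 5 +
   Series (fun k : nat => cc n (6 + k) * y ^ (6 + k)) - sum_f_R0 (fun k : nat => cc n k * y ^ k) 5)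
   with (Series (fun k : nat => cc n (6 + k) * y ^ (6 + k))) by ring.
  apply tail_bound; exact hy.
Qed.

Lemma J01_num : 0.7648 <= J0 1 <= 0.7656 /\ 0.4398 <= J1 1 <= 0.4403.
Proof.
  rewrite J0_eq, J1_eq. replace ((1/2)^2) with (1/4) by field.
  pose proof (H_bound 0 (1/4) ltac:(lra)) as B0.
  pose proof (H_bound 1 (1/4) ltac:(lra)) as B1.
  unfold cc in B0, B1. simpl sum_f_R0 in B0, B1. simpl fact in B0, B1.
  apply Rabs_le_between in B0. apply Rabs_le_between in B1.
  simpl pow in B0, B1. lra.
Qed.

Lemma En1 : En 1 <= 0.7366.
Proof.
  destruct J01_num as [[a1 a2] [b1 b2]]. unfold En.
  set (a := J0 1) in *. set (b := J1 1) in *. clearbody a b.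
  replace (a ^ 2 / (2 * 1)) with (a^2 * 0.5) by (unfold Rdiv; f_equal; lra).
  nra.
Qed.

Lemma s0_bound x : 1 <= x -> J0 x ^2 + J1 x ^2 <= 1.474 / x.
Proof.
  intros hx. pose proof (En_decr x hx). pose proof En1.
  unfold En in *.
  assert (x * (J0 x ^ 2 + J1 x ^ 2) - J0 x * J1 x + J0 x ^ 2 / (2 * x) >= (x/2) * (J0 x^2 + J1 x^2)).
  { assert (0 <= J0 x ^ 2 / (2 * x)). { apply Rmult_le_pos; [apply pow2_ge_0|left; apply Rinv_0_lt_compat; lra]. }
    pose proof (pow2_ge_0 (J0 x - J1 x)). assert (0 <= (x-1)*(J0 x ^ 2 + J1 x ^ 2)).
    { apply Rmult_le_pos; [lra|]. pose proof (pow2_ge_0 (J0 x)); pose proof (pow2_ge_0 (J1 x)); lra. }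
    nra. }
  apply (Rmult_le_reg_l x); [lra|]. replace (x * (1.474/x)) with 1.474 by (field; lra). lra.
Qed.
Lemma quad_nonneg al be ga p q : 0 < al -> ga^2 <= al*be ->
  0 <= al*p^2 + be*q^2 + 2*ga*p*q.
Proof.
  intros h1 h2. apply (Rmult_le_reg_l al); [lra|]. rewrite Rmult_0_r.
  replace (al * (al*p^2 + be*q^2 + 2*ga*p*q)) with ((al*p+ga*q)^2 + (al*be - ga^2)*q^2) by ring.
  pose proof (pow2_ge_0 (al*p+ga*q)). pose proof (pow2_ge_0 q).
  assert (0 <= (al * be - ga ^ 2) * q ^ 2) by (apply Rmult_le_pos; lra). lra.
Qed.

Lemma step_gen R c p q : 1 < R -> c^2 <= (R-1)*(R-1-c^2) ->
  q^2 + (c*q - p)^2 <= R * (p^2 + q^2).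
Proof.
  intros h1 h2. pose proof (quad_nonneg (R-1) (R-1-c^2) c p q ltac:(lra) h2). nra.
Qed.

Lemma binom2 P a n : 0 <= P -> 0 <= a -> P^(S n) + INR (S n) * a * P^n <= (P+a)^(S n).
Proof.
  intros hP ha. induction n as [|n IH].
  - simpl. lra.
  - change ((P+a)^(S (S n))) with ((P+a)*(P+a)^(S n)). rewrite S_INR.
    assert (0 <= P^n) by (apply pow_le; lra).
    assert (0 <= P^(S n)) by (apply pow_le; lra).
    assert ((P+a)*(P ^ S n + INR (S n) * a * P ^ n) <= (P+a)*(P+a)^(S n)) by (apply Rmult_le_compat_l; lra).
    assert (P^(S (S n)) = P * P^(S n)) by reflexivity.
    assert (P^(S n) = P * P^n) by reflexivity.
    pose proof (pos_INR (S n)).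
    assert (0 <= a * a * INR (S n) * P^n) by (repeat apply Rmult_le_pos; lra).
    nra.
Qed.

Lemma bern_step s a : 0 <= a ->
  (1 + INR (2*s+1) * a) * (1 + INR s * a)^s <= (1 + INR (S s) * a)^(S s).
Proof.
  intros ha. set (P := 1 + INR s * a).
  assert (hP : 1 <= P) by (unfold P; pose proof (pos_INR s); nra).
  replace (1 + INR (S s) * a) with (P + a) by (unfold P; rewrite S_INR; ring).
  replace (1 + INR (2*s+1) * a) with (P + INR (S s) * a) by
    (unfold P; rewrite plus_INR, mult_INR, S_INR; simpl; ring).
  pose proof (binom2 P a s ltac:(lra) ha) as B.
  assert (P^(S s) = P * P^s) by reflexivity. nra.
Qed.
Lemma J_abs_bound n x : 0 < x < 2 -> Rabs (bessel_J n x) <= 1 / (1 - (x/2)^2).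
Proof.
  intros hx. rewrite J_H, Rabs_mult.
  assert (hy : 0 <= (x/2)^2 < 1) by (split; [apply pow2_ge_0| nra]).
  pose proof (tail_bound n ((x/2)^2) 0 hy) as T. simpl (0 + _)%nat in T.
  change (Series (fun k => cc n k * ((x/2)^2)^k)) with (H n ((x/2)^2)) in T.
  rewrite pow_O in T.
  assert (Rabs ((x/2)^n) <= 1).
  { rewrite <- RPow_abs. rewrite Rabs_pos_eq by lra. rewrite <- (pow1 n). apply pow_incr. lra. }
  pose proof (Rabs_pos (H n ((x / 2) ^ 2))). nra.
Qed.
Lemma step_cond_u u a : 3 <= u -> 0 < a <= 2/3 ->
  ((u+1)*a)^2 <= ((1+u*a)^2-1)*((1+u*a)^2-1-((u+1)*a)^2).
Proof.
  intros hu ha.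
  assert (E : ((1+u*a)^2-1)*((1+u*a)^2-1-((u+1)*a)^2) - ((u+1)*a)^2 =
     a^2 * ((u-1-u*a) * (3*u+1+u*(2*u+1)*a))) by ring.
  assert (0 <= u-1-u*a) by nra.
  assert (0 <= 3*u+1+u*(2*u+1)*a) by nra.
  assert (0 <= a^2 * ((u-1-u*a) * (3*u+1+u*(2*u+1)*a))).
  { apply Rmult_le_pos. apply pow2_ge_0. apply Rmult_le_pos; lra. }
  lra.
Qed.

Lemma step1_cond a : 0 < a <= 1 ->
  (2*a)^2 <= ((14641/10000)*(1+a)^2-1)*((14641/10000)*(1+a)^2-1-(2*a)^2).
Proof.
  intros ha. assert (h2 : a^2 <= a) by nra. assert (h3 : a^3 <= a^2) by nra.
  assert (h4 : a^4 <= a^3) by nra. assert (0 <= a^4) by (apply pow_le; lra).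
  assert (0 <= a^3) by (apply pow_le; lra).
  assert (E : ((14641/10000)*(1+a)^2-1)*((14641/10000)*(1+a)^2-1-(2*a)^2) - (2*a)^2 =
    21538881/100000000 + 67948881/25000000*a + 203846643/50000000*a^2 - 78461119/25000000*a^3 - 371281119/100000000*a^4) by field.
  lra.
Qed.
Lemma direct_region n x : 1 <= x < 3/2 ->
  bessel_J n x ^2 + bessel_J (n+1) x ^2 <= 11.
Proof.
  intros hx.
  pose proof (J_abs_bound n x ltac:(lra)). pose proof (J_abs_bound (n+1) x ltac:(lra)).
  assert (1 / (1 - (x/2)^2) <= 16/7).
  { assert (0 < 1 - (x/2)^2) by nra. apply (Rmult_le_reg_r (1 - (x/2)^2)); [lra|].
    unfold Rdiv. rewrite Rmult_1_l, Rinv_l by lra. nra. }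
  rewrite <- (pow2_abs (bessel_J n x)), <- (pow2_abs (bessel_J (n+1) x)).
  pose proof (Rabs_pos (bessel_J n x)). pose proof (Rabs_pos (bessel_J (n+1) x)). nra.
Qed.

Lemma main_bound n x : 1 <= x ->
  bessel_J n x ^2 + bessel_J (n+1) x ^2 <= 2.2 * ((1 + INR n / x)^n)^2 / x.
Proof.
  intros hx. assert (hx0 : 0 < x) by lra.
  set (a := /x). assert (ha : 0 < a <= 1).
  { split. unfold a; apply Rinv_0_lt_compat; lra. unfold a; rewrite <- Rinv_1; apply Rinv_le_contravar; lra. }
  assert (hdiv : forall t, t / x = t * a) by (intros; unfold a, Rdiv; reflexivity).
  rewrite !hdiv.
  induction n as [|n IH].
  - pose proof (s0_bound x hx). unfold J0, J1 in *. simpl. rewrite hdiv in *. nra.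
  - destruct n as [|n].
    +
      pose proof (s0_bound x hx) as B. unfold J0, J1 in B. rewrite hdiv in B.
      pose proof (J_rec 0 x hx0) as R. simpl (0+2)%nat in R. simpl (0+1)%nat in R.
      simpl (1+1)%nat. rewrite R.
      replace (2 * INR 1 / x) with (2*a) by (rewrite hdiv; simpl; ring).
      pose proof (step_gen ((14641/10000)*(1+a)^2) (2*a) (bessel_J 0 x) (bessel_J 1 x)
        ltac:(nra) (step1_cond a ha)) as St.
      assert (0 <= (1+a)^2) by apply pow2_ge_0.
      simpl INR. simpl pow. simpl pow in St, B.
      assert (0 <= (1 + a * 1) * (1 + a * 1) * a) by (apply Rmult_le_pos; nra).
      nra.
    +
      destruct (Rlt_or_le x (3/2)) as [hs|hs].
      * pose proof (direct_region (S (S n)) x ltac:(lra)).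
        assert (2 <= INR (S (S n))) by (rewrite !S_INR; pose proof (pos_INR n); lra).
        assert (7/3 <= 1 + INR (S (S n)) * a).
        { assert (2/3 <= a). { unfold a. apply (Rmult_le_reg_r x); [lra|]. rewrite Rinv_l by lra. lra. }
          nra. }
        assert (1 <= 1 + INR (S (S n)) * a) by lra.
        assert ((1 + INR (S (S n)) * a)^2 <= (1 + INR (S (S n)) * a)^(S (S n))).
        { set (b := 1 + INR (S (S n)) * a) in *. clearbody b.
          replace (S (S n)) with (2 + n)%nat by lia. rewrite pow_add.
          assert (1 <= b^n) by (apply pow_R1_Rle; lra).
          assert (0 <= b^2) by apply pow2_ge_0. nra. }
        assert (2/3 <= a). { unfold a. apply (Rmult_le_reg_r x); [lra|]. rewrite Rinv_l by lra. lra. }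
        set (P := (1 + INR (S (S n)) * a)^(S (S n))) in *.
        assert ((7/3)^2 <= (1 + INR (S (S n)) * a)^2) by (apply pow_incr; lra).
        nra.
      * pose proof (J_rec (S n) x hx0) as R.
        replace (S (S n) + 1)%nat with (S n + 2)%nat by lia.
        replace (S (S n)) with (S n + 1)%nat at 1 by lia.
        rewrite R. replace (S n + 1)%nat with (S (S n)) by lia.
        rewrite hdiv in R.
        set (u := INR (2 * S n + 1)).
        assert (hun : u = 2*INR n + 3).
        { unfold u. replace (2*S n+1)%nat with (2*n+3)%nat by lia. rewrite plus_INR, mult_INR. simpl. ring. }
        assert (hSn : INR (S (S n)) = INR n + 2) by (rewrite !S_INR; ring).
        assert (hSn1 : INR (S n) = INR n + 1) by (rewrite !S_INR; ring).
        assert (hu : 3 <= u) by (pose proof (pos_INR n); lra).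
        rewrite hdiv.
        assert (ha2 : a <= 2/3).
        { unfold a. apply (Rmult_le_reg_r x); [lra|]. rewrite Rinv_l by lra. lra. }
        replace (2 * INR (S (S n)) * a) with ((u+1)*a)
          by (rewrite hun, hSn; ring).
        pose proof (step_gen ((1+u*a)^2) ((u+1)*a) (bessel_J (S n) x) (bessel_J (S (S n)) x)
          ltac:(nra) (step_cond_u u a hu (conj (proj1 ha) ha2))) as St.
        replace (S n + 1)%nat with (S (S n)) in IH by lia.
        pose proof (bern_step (S n) a ltac:(lra)) as Bn. fold u in Bn.
        assert (0 <= (1 + u * a) * (1 + INR (S n) * a) ^ S n).
        { apply Rmult_le_pos. nra. apply pow_le. pose proof (pos_INR (S n)); nra. }
        assert (((1 + u * a) * (1 + INR (S n) * a) ^ S n)^2 <= ((1 + INR (S (S n)) * a) ^ S (S n))^2)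
          by (apply pow_incr; lra).
        replace (2.2 * ((1 + INR (S (S n)) * a) ^ S (S n)) ^ 2 * a) with
          (2.2 * a * ((1 + INR (S (S n)) * a) ^ S (S n)) ^ 2) by ring.
        assert ((1+u*a)^2 * (2.2 * ((1 + INR (S n) * a) ^ S n) ^ 2 * a) =
          2.2 * a * ((1 + u * a) * (1 + INR (S n) * a) ^ S n)^2) by ring.
        assert ((1+u*a)^2 * (bessel_J (S n) x ^ 2 + bessel_J (S (S n)) x ^ 2) <=
                (1+u*a)^2 * (2.2 * ((1 + INR (S n) * a) ^ S n) ^ 2 * a))
          by (apply Rmult_le_compat_l; [apply pow2_ge_0| exact IH]).
        nra.
Qed.
Lemma PI_le : PI <= 3.6.
Proof.
  destruct (PI_ineq 1) as [_ h]. unfold tg_alt, PI_tg in h. simpl in h. lra.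
Qed.

Theorem lemma3 (x : R) (s : nat) (hx : 0 < x) :
  Rabs (bessel_J s x) <= 2 * sqrt (2 / (PI * x)) * (1 + INR s / x) ^ s.
Proof.
  set (P := (1 + INR s / x) ^ s).
  assert (hP : 1 <= P).
  { unfold P. apply pow_R1_Rle. pose proof (pos_INR s).
    assert (0 <= INR s / x) by (apply Rmult_le_pos; [lra| left; apply Rinv_0_lt_compat; lra]). lra. }
  pose proof PI_le. pose proof PI_RGT_0.
  assert (hq : 0 < 2 / (PI * x)) by (apply Rmult_lt_0_compat; [lra| apply Rinv_0_lt_compat; nra]).
  pose proof (sqrt_lt_R0 _ hq) as hsq.
  pose proof (sqrt_sqrt _ (Rlt_le _ _ hq)) as hss.
  set (r := sqrt (2 / (PI * x))) in *.
  assert (Rabs (bessel_J s x) ^2 <= (2 * r * P)^2).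
  { rewrite pow2_abs.
    replace ((2*r*P)^2) with (8 / (PI * x) * P^2) by (replace (8 / (PI*x)) with (4 * (2/(PI*x))) by (field; split; lra); rewrite <- hss; ring).
    assert (hPx : 0 < PI * x) by nra.
    destruct (Rlt_or_le x 1) as [h1|h1].
    - pose proof (J_abs_bound s x ltac:(lra)) as B.
      assert (1 / (1 - (x/2)^2) <= 4/3).
      { assert (0 < 1 - (x/2)^2) by nra. apply (Rmult_le_reg_r (1 - (x/2)^2)); [lra|].
        unfold Rdiv. rewrite Rmult_1_l, Rinv_l by lra. nra. }
      assert (2 <= 8 / (PI * x)).
      { apply (Rmult_le_reg_r (PI*x)); [lra|]. unfold Rdiv. rewrite Rmult_assoc, Rinv_l by lra. nra. }
      rewrite <- pow2_abs. pose proof (Rabs_pos (bessel_J s x)).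
      assert (1 <= P^2) by nra. nra.
    - pose proof (main_bound s x h1) as M. fold P in M.
      pose proof (pow2_ge_0 (bessel_J (s+1) x)).
      assert (2.2 * P^2 / x <= 8 / (PI * x) * P^2).
      { unfold Rdiv. rewrite Rinv_mult. 
        assert (0 < /x) by (apply Rinv_0_lt_compat; lra).
        assert (2.2 <= 8 * / PI).
        { apply (Rmult_le_reg_r PI); [lra|]. rewrite Rmult_assoc, Rinv_l by lra. lra. }
        assert (0 <= P^2 * /x) by (apply Rmult_le_pos; [apply pow2_ge_0|lra]). nra. }
      lra. }
  assert (0 <= 2 * r * P) by nra.
  pose proof (Rabs_pos (bessel_J s x)).
  nra.
Qed.
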